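(* Let $N$ be an odd positive integer and $r\ge s\ge2$. The transfer homomorphism $V:(\Phi_r^s)^{\mathrm{ab}}\to\Gamma_1(N2^r)^{\mathrm{ab}}$ associated to the finite-index subgroup $\Gamma_1(N2^r)\subseteq\Phi_r^s$ commutes with the action of the Atkin operator $U$ on its source and target.
   Context: For $M\ge1$, $\Gamma_1(M)=\{\begin{pmatrix}a&b\\c&d\end{pmatrix}\in\mathrm{SL}_2(\mathbb{Z}) : c\equiv0,\ a\equiv d\equiv1 \pmod M\}$, $\Gamma_0(M)=\{c\equiv 0\pmod M\}$, $\Gamma^0(2)=\{b\equiv0\pmod 2\}$ (inside $\mathrm{SL}_2(\mathbb{Z})$). For $r\ge s\ge2$, $\Phi_r^s:=\Gamma_1(N2^s)\cap\Gamma_0(2^r)$, so $\Phi_r^r=\Gamma_1(N2^r)$; $G^{\mathrm{ab}}$ denotes abelianization. With $t=\begin{pmatrix}1&0\\0&2\end{pmatrix}$, the Atkin operator $U$ on $(\Phi_r^s)^{\mathrm{ab}}$ (for any $r\ge s\ge 2$) is the composite of the transfer $(\Phi_r^s)^{\mathrm{ab}}\to(\Phi_r^s\cap\Gamma^0(2))^{\mathrm{ab}}$, the map induced by the isomorphism $x\mapsto txt^{-1}$ from $\Phi_r^s\cap\Gamma^0(2)$ onto $\Phi_{r+1}^s$, and the inclusion-induced map $(\Phi_{r+1}^s)^{\mathrm{ab}}\to(\Phi_r^s)^{\mathrm{ab}}$. *)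

(* Defs.v *)
From mathcomp Require Import all_boot all_order all_algebra.
Set Implicit Arguments. Unset Strict Implicit. Unset Printing Implicit Defensive.
Import Order.TTheory GRing.Theory Num.Theory.
Local Open Scope ring_scope.

Notation mat := ('M[int]_2).

Definition ea (A : mat) : int := A 0 0.
Definition eb (A : mat) : int := A 0 1.
Definition ec (A : mat) : int := A 1 0.
Definition ed (A : mat) : int := A 1 1.

Definition SL2 (A : mat) : bool := \det A == 1.

Definition Gamma1 (M : nat) (A : mat) : bool :=
  [&& SL2 A, (M%:Z %| ec A)%Z, (ea A == 1 %[mod M%:Z])%Z & (ed A == 1 %[mod M%:Z])%Z].

Definition Gamma0 (M : nat) (A : mat) : bool := SL2 A && (M%:Z %| ec A)%Z.

Definition Gamma0up2 (A : mat) : bool := SL2 A && (2 %| eb A)%Z.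

Definition Phi (N r s : nat) (A : mat) : bool :=
  Gamma1 (N * 2 ^ s) A && Gamma0 (2 ^ r) A.

Definition capG02 (G : pred mat) : pred mat := fun A => G A && Gamma0up2 A.

Definition is_rtransversal (G H : pred mat) (ts : seq mat) : Prop :=
  (forall t, t \in ts -> G t) /\
  (forall g, G g -> exists! i : nat, (i < size ts)%N /\ H (g *m invmx (nth 1%:M ts i))).

(* Transfer G -> H on representatives, w.r.t. the right transversal ts:
   for each t_i, t_i g = h_i t_{sigma(i)} with h_i in H, and V(g) = prod h_i
   (product taken in H, hence well defined modulo [H,H]). *)
Definition transfer (H : pred mat) (ts : seq mat) (g : mat) : mat :=
  \big[mulmx/1%:M]_(t <- ts)
     (t *m g *m invmx (nth 1%:M ts (find (fun u => H (t *m g *m invmx u)) ts))).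

(* Conjugation x |-> t x t^{-1} with t = diag(1,2): entry (i,j) is
   t_i * x_ij / t_j  (integral when x is in Gamma^0(2)). *)
Definition tdiag (i : 'I_2) : int := if i == 0 then 1 else 2.
Definition conjt (A : mat) : mat :=
  \matrix_(i, j) ((tdiag i * A i j) %/ tdiag j)%Z.
Definition tmx : mat := \matrix_(i, j) (if i == j then tdiag i else 0).

Lemma conjtE (A : mat) : (2 %| eb A)%Z -> tmx *m A = conjt A *m tmx.
Proof.
move=> hb; apply/matrixP => i j.
have E : forall k : 'I_2, k = 0 \/ k = 1.
  move=> [[|[|k]] Hk]; [left|right|] => //; by apply: val_inj.
have L : lift ord0 ord0 = 1 :> 'I_2 by apply: val_inj.
rewrite !mxE !big_ord_recl big_ord0 !mxE /tdiag /=.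
move: hb; rewrite /eb => hb.
case: (E i) => ->; case: (E j) => -> /=;
  rewrite ?mul1r ?mulr1 ?mul0r ?mulr0 ?add0r ?addr0 ?divz1 big_ord0 ?addr0 ?L //.
- by rewrite divzK.
- by rewrite mulKz // mulrC.
Qed.

(* Atkin operator on representatives: transfer G -> G \cap Gamma^0(2),
   then x |-> t x t^{-1}, then inclusion (identity on representatives). *)
Definition atkin (G : pred mat) (ts : seq mat) (g : mat) : mat :=
  conjt (transfer (capG02 G) ts g).

Inductive commsub (H : pred mat) : mat -> Prop :=
| cs_comm x y : H x -> H y -> commsub H (x *m y *m invmx x *m invmx y)
| cs_one : commsub H 1%:M
| cs_mul x y : commsub H x -> commsub H y -> commsub H (x *m y)
| cs_inv x : commsub H x -> commsub H (invmx x).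

(* equality in H^ab of (the classes of) x and y *)
Definition abeq (H : pred mat) (x y : mat) : Prop := commsub H (x *m invmx y).

(* Main.v *)
Require Import Defs.
From mathcomp Require Import all_boot all_order all_algebra.
From mathcomp Require Import ring zify.
Set Implicit Arguments. Unset Strict Implicit. Unset Printing Implicit Defensive.
Import Order.TTheory GRing.Theory Num.Theory.
Local Open Scope ring_scope.


Definition grp (G : pred mat) :=
  [/\ G 1, (forall x y, G x -> G y -> G (x * y)),
      (forall x, G x -> G x^-1) & (forall x, G x -> x \is a GRing.unit)].

Lemma grp1 G : grp G -> G 1. Proof. by case. Qed.
Lemma grpM G x y : grp G -> G x -> G y -> G (x * y). Proof. by case=> _ h _ _; apply: h. Qed.
Lemma grpV G x : grp G -> G x -> G x^-1. Proof. by case=> _ _ h _; apply: h. Qed.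
Lemma grpU G x : grp G -> G x -> x \is a GRing.unit. Proof. by case=> _ _ _ h; apply: h. Qed.

Lemma commsubE (H : pred mat) x y : commsub H (x * y * x^-1 * y^-1) <-> commsub H (x *m y *m invmx x *m invmx y).
Proof. by []. Qed.

Lemma cs_comm' (H : pred mat) x y : H x -> H y -> commsub H (x * y * x^-1 * y^-1).
Proof. exact: cs_comm. Qed.
Lemma cs_mul' (H : pred mat) x y : commsub H x -> commsub H y -> commsub H (x * y).
Proof. exact: cs_mul. Qed.
Lemma cs_inv' (H : pred mat) x : commsub H x -> commsub H x^-1.
Proof. exact: cs_inv. Qed.
Lemma cs_one' (H : pred mat) : commsub H 1.
Proof. exact: cs_one. Qed.

Lemma commsub_in H z : grp H -> commsub H z -> H z.
Proof.
move=> gH; elim=> {z}.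
- move=> x y hx hy; change (H (x * y * x^-1 * y^-1)).
  by do !(apply: grpM => //; try apply: grpV).
- exact: grp1.
- by move=> x y _ hx _ hy; apply: grpM.
- by move=> x _ hx; apply: grpV.
Qed.

Lemma commsub_mono (H H' : pred mat) z : (forall x, H x -> H' x) -> commsub H z -> commsub H' z.
Proof.
move=> sub; elim=> {z}.
- by move=> x y hx hy; apply: cs_comm; apply: sub.
- exact: cs_one.
- by move=> x y _ hx _ hy; apply: cs_mul.
- by move=> x _ hx; apply: cs_inv.
Qed.

Lemma unitM (x y : mat) : x \is a GRing.unit -> y \is a GRing.unit -> x * y \is a GRing.unit.
Proof. by move=> ux uy; rewrite unitrMl. Qed.

Lemma invJ (c x : mat) : c \is a GRing.unit -> x \is a GRing.unit ->
  (c * x * c^-1)^-1 = c * x^-1 * c^-1.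
Proof. by move=> uc ux; rewrite invrM ?unitM ?unitrV // invrK invrM // mulrA. Qed.

Lemma commsub_conj H z c : grp H -> H c -> commsub H z -> commsub H (c * z * c^-1).
Proof.
move=> gH hc cz; have uc := grpU gH hc.
elim: cz => {z}.
- move=> x y hx hy; change (commsub H (c * (x * y * x^-1 * y^-1) * c^-1)).
  have ux := grpU gH hx; have uy := grpU gH hy.
  have -> : c * (x * y * x^-1 * y^-1) * c^-1 =
    (c * x * c^-1) * (c * y * c^-1) * (c * x * c^-1)^-1 * (c * y * c^-1)^-1.
    by rewrite !invJ // !mulrA !divrK.
  by apply: cs_comm'; do !(apply: grpM => //; try apply: grpV).
- by rewrite mulr1 mulrV //; exact: cs_one.
- move=> x y _ hx _ hy.
  have -> : c * (x * y) * c^-1 = (c * x * c^-1) * (c * y * c^-1).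
    by rewrite !mulrA divrK.
  exact: cs_mul'.
- move=> x cx hx.
  have ux : x \is a GRing.unit by apply: grpU gH (commsub_in gH cx).
  have -> : c * invmx x * c^-1 = (c * x * c^-1)^-1.
    by rewrite invJ.
  exact: cs_inv'.
Qed.

Lemma abeq_refl (H : pred mat) x : x \is a GRing.unit -> abeq H x x.
Proof. by move=> ux; rewrite /abeq; change (commsub H (x * x^-1)); rewrite mulrV //; exact: cs_one. Qed.

Lemma abeq_eq (H : pred mat) x y : x = y -> x \is a GRing.unit -> abeq H x y.
Proof. by move=> ->; apply: abeq_refl. Qed.

Lemma abeq_sym (H : pred mat) x y : x \is a GRing.unit -> y \is a GRing.unit -> abeq H x y -> abeq H y x.
Proof.
move=> ux uy; rewrite /abeq => c; change (commsub H (y * x^-1)).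
have -> : y * x^-1 = (x * y^-1)^-1 by rewrite invrM ?unitrV // invrK.
exact: cs_inv'.
Qed.

Lemma abeq_trans (H : pred mat) x y z : y \is a GRing.unit -> abeq H x y -> abeq H y z -> abeq H x z.
Proof.
move=> uy c1 c2; change (commsub H (x * z^-1)).
have -> : x * z^-1 = (x * y^-1) * (y * z^-1) by rewrite mulrA divrK.
exact: cs_mul'.
Qed.

Lemma abeq_mul H x y x' y' : grp H -> H x' -> H y' ->
  abeq H x x' -> abeq H y y' -> abeq H (x * y) (x' * y').
Proof.
move=> gH hx' hy' c1 c2; change (commsub H (x * y * (x' * y')^-1)).
have ux := grpU gH hx'; have uy := grpU gH hy'.
have -> : x * y * (x' * y')^-1 = (x * x'^-1) * (x' * (y * y'^-1) * x'^-1).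
  by rewrite invrM // !mulrA divrK.
apply: cs_mul' => //; exact: commsub_conj.
Qed.

Lemma abeq_comm H x y : grp H -> H x -> H y -> abeq H (x * y) (y * x).
Proof.
move=> gH hx hy; change (commsub H (x * y * (y * x)^-1)).
rewrite invrM ?(grpU gH) // mulrA; exact: cs_comm'.
Qed.


Lemma prodH (H : pred mat) (I : eqType) (s : seq I) (F : I -> mat) :
  grp H -> {in s, forall i, H (F i)} -> H (\prod_(i <- s) F i).
Proof.
move=> gH; elim: s => [|x s IH] hs; first by rewrite big_nil; exact: grp1.
rewrite big_cons; apply: grpM => //; first by apply: hs; rewrite inE eqxx.
by apply: IH => i hi; apply: hs; rewrite inE hi orbT.
Qed.

Lemma abeq_perm (H : pred mat) (I : eqType) (s1 s2 : seq I) (F : I -> mat) :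
  grp H -> perm_eq s1 s2 -> {in s1, forall i, H (F i)} ->
  abeq H (\prod_(i <- s1) F i) (\prod_(i <- s2) F i).
Proof.
move=> gH; elim: s1 s2 => [|x s IH] s2 hp hs.
  by move: hp; rewrite perm_sym => /perm_nilP ->; apply: abeq_refl; rewrite big_nil unitr1.
have xs2 : x \in s2 by rewrite -(perm_mem hp) inE eqxx.
case/splitPr: xs2 hp => p1 p2 hp.
have hp' : perm_eq s (p1 ++ p2).
  by rewrite -(perm_cons x); apply: (perm_trans hp); rewrite -cat1s perm_catCA.
have hs' : {in s, forall i, H (F i)} by move=> i hi; apply: hs; rewrite inE hi orbT.
have hx : H (F x) by apply: hs; rewrite inE eqxx.
have hin : {in p1 ++ p2, forall i, H (F i)} by move=> i; rewrite -(perm_mem hp'); apply: hs'.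
have h1 : H (\prod_(i <- p1) F i) by apply: prodH => // i hi; apply: hin; rewrite mem_cat hi.
have h2 : H (\prod_(i <- p2) F i) by apply: prodH => // i hi; apply: hin; rewrite mem_cat hi orbT.
rewrite big_cons big_cat big_cons /=.
apply: (@abeq_trans _ _ (F x * (\prod_(i <- p1) F i * \prod_(i <- p2) F i))).
  by apply: unitM; apply: (grpU gH) => //; apply: grpM.
  apply: abeq_mul => //; first by apply: grpM.
    by apply: abeq_refl; apply: (grpU gH).
  by rewrite -big_cat; apply: IH.
rewrite !mulrA; apply: abeq_mul => //; first by apply: grpM.
  exact: abeq_comm.
by apply: abeq_refl; apply: (grpU gH).
Qed.

Lemma abeq_prodM (H : pred mat) (I : eqType) (s : seq I) (F G : I -> mat) :
  grp H -> {in s, forall i, H (F i)} -> {in s, forall i, H (G i)} ->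
  abeq H (\prod_(i <- s) (F i * G i)) (\prod_(i <- s) F i * \prod_(i <- s) G i).
Proof.
move=> gH; elim: s => [|x s IH] hF hG.
  by rewrite !big_nil mulr1; apply: abeq_refl; exact: unitr1.
have hF' : {in s, forall i, H (F i)} by move=> i hi; apply: hF; rewrite inE hi orbT.
have hG' : {in s, forall i, H (G i)} by move=> i hi; apply: hG; rewrite inE hi orbT.
have hx : H (F x) by apply: hF; rewrite inE eqxx.
have gx : H (G x) by apply: hG; rewrite inE eqxx.
have pF : H (\prod_(i <- s) F i) by apply: prodH.
have pG : H (\prod_(i <- s) G i) by apply: prodH.
rewrite !big_cons.
apply: (@abeq_trans _ _ (F x * G x * (\prod_(i <- s) F i * \prod_(i <- s) G i))).
  by apply: unitM; [apply: unitM|apply: unitM]; apply: (grpU gH).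
  apply: abeq_mul => //; try by apply: grpM.
    by apply: abeq_refl; apply: unitM; apply: (grpU gH).
  exact: IH.
rewrite -!mulrA; apply: abeq_mul => //; first by apply: grpM => //; apply: grpM.
  by apply: abeq_refl; apply: (grpU gH).
rewrite !mulrA; apply: abeq_mul => //.
  exact: grpM.
  exact: abeq_comm.
by apply: abeq_refl; apply: (grpU gH).
Qed.

Lemma abeq_prod (H : pred mat) (I : eqType) (s : seq I) (F G : I -> mat) :
  grp H -> {in s, forall i, H (G i)} -> {in s, forall i, F i \is a GRing.unit} ->
  {in s, forall i, abeq H (F i) (G i)} ->
  abeq H (\prod_(i <- s) F i) (\prod_(i <- s) G i).
Proof.
move=> gH; elim: s => [|x s IH] hG uF hFG.
  by rewrite !big_nil; apply: abeq_refl; exact: unitr1.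
rewrite !big_cons; apply: abeq_mul => //.
- by apply: hG; rewrite inE eqxx.
- by apply: prodH => // i hi; apply: hG; rewrite inE hi orbT.
- by apply: hFG; rewrite inE eqxx.
apply: IH => i hi; [apply: hG|apply: uF|apply: hFG]; by rewrite inE hi orbT.
Qed.


Definition rho (H : pred mat) (ts : seq mat) (x : mat) :=
  nth 1 ts (find (fun u => H (x * u^-1)) ts).

Lemma trE H ts g : transfer H ts g = \prod_(t <- ts) (t * g * (rho H ts (t * g))^-1).
Proof. by []. Qed.

Definition sub (H G : pred mat) := forall x, H x -> G x.

Definition rt (G H : pred mat) (ts : seq mat) :=
  [/\ {in ts, forall t, G t}, uniq ts,
      (forall g, G g -> exists2 t, t \in ts & H (g * t^-1)) &
      {in ts &, forall t t', H (t * t'^-1) -> t = t'}].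

Lemma rt_of G H ts : grp G -> grp H -> sub H G -> is_rtransversal G H ts -> rt G H ts.
Proof.
move=> gG gH sHG [inG uq].
have H1 : forall t, t \in ts -> H (t * t^-1).
  by move=> t /inG /(grpU gG) ut; rewrite mulrV //; exact: grp1.
have key : forall i j, (i < size ts)%N -> (j < size ts)%N ->
   H (nth 1 ts i * (nth 1 ts j)^-1) -> i = j.
  move=> i j hi hj hij.
  have [k [_ uk]] := uq (nth 1 ts i) (inG _ (mem_nth _ hi)).
  by rewrite -(uk i) ?(uk j) //; split=> //; apply: H1; exact: mem_nth.
split.
- exact: inG.
- apply/(uniqP 1) => i j hi hj e; apply: key => //.
  by rewrite e; apply: H1; apply: mem_nth.
- move=> g hg; have [i [[hi hgi] _]] := uq g hg.
  by exists (nth 1 ts i) => //; apply: mem_nth.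
- move=> t t' ht ht' htt.
  rewrite -(nth_index 1 ht) -(nth_index 1 ht').
  by rewrite (key (index t ts) (index t' ts)) ?index_mem ?nth_index.
Qed.


Lemma rho_spec G H ts x : rt G H ts -> G x ->
  rho H ts x \in ts /\ H (x * (rho H ts x)^-1).
Proof.
case=> _ _ cov _ hx; have [t ht hxt] := cov x hx.
have hs : has (fun u => H (x * u^-1)) ts by apply/hasP; exists t.
split; first by rewrite /rho mem_nth // -has_find.
exact: (nth_find 1 hs).
Qed.

Lemma rho_in G H ts x : rt G H ts -> G x -> rho H ts x \in ts.
Proof. by move=> r hx; case: (rho_spec r hx). Qed.

Lemma rho_H G H ts x : rt G H ts -> G x -> H (x * (rho H ts x)^-1).
Proof. by move=> r hx; case: (rho_spec r hx). Qed.

Lemma rho_G G H ts x : rt G H ts -> G x -> G (rho H ts x).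
Proof. by move=> r hx; case: (r) => inG _ _ _; apply: inG; apply: rho_in r hx. Qed.

Lemma rho_eq G H ts x u : grp G -> grp H -> rt G H ts -> G x -> u \in ts ->
  H (x * u^-1) -> rho H ts x = u.
Proof.
move=> gG gH r hx hu hxu; case: (r) => inG _ _ dis.
apply: dis => //; first exact: rho_in r hx.
have ux := grpU gG hx; have ur := grpU gG (rho_G r hx).
have -> : rho H ts x * u^-1 = (x * (rho H ts x)^-1)^-1 * (x * u^-1).
  by rewrite invrM ?unitrV // invrK mulrA divrK.
by apply: grpM => //; apply: grpV => //; apply: rho_H r hx.
Qed.

Lemma coset_H G H x y z : grp G -> grp H -> G x -> G y -> G z ->
  H (x * z^-1) -> H (y * z^-1) -> H (x * y^-1).
Proof.
move=> gG gH hx hy hz h1 h2.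
have -> : x * y^-1 = (x * z^-1) * (y * z^-1)^-1.
  by rewrite invrM ?unitrV ?(grpU gG) // invrK mulrA divrK // (grpU gG).
by apply: grpM => //; apply: grpV.
Qed.

Lemma rho_coset G H ts x y : grp G -> grp H -> rt G H ts -> G x -> G y ->
  H (x * y^-1) -> rho H ts x = rho H ts y.
Proof.
move=> gG gH r hx hy hxy; apply: (rho_eq gG gH r hx (rho_in r hy)).
have -> : x * (rho H ts y)^-1 = (x * y^-1) * (y * (rho H ts y)^-1).
  by rewrite mulrA divrK // (grpU gG).
by apply: grpM => //; apply: rho_H r hy.
Qed.

Lemma mulgK' (t g t' : mat) : g \is a GRing.unit -> t' \is a GRing.unit ->
  t * g * (t' * g)^-1 = t * t'^-1.
Proof. by move=> ug ut; rewrite invrM // mulrA mulrK. Qed.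

Lemma rho_perm G H ts g : grp G -> grp H -> rt G H ts -> G g ->
  perm_eq [seq rho H ts (t * g) | t <- ts] ts.
Proof.
move=> gG gH r hg; case: (r) => inG uq _ dis.
have hG : forall t, t \in ts -> G (t * g) by move=> t ht; apply: grpM => //; apply: inG.
have um : uniq [seq rho H ts (t * g) | t <- ts].
  rewrite map_inj_in_uniq // => t t' ht ht' e; apply: dis => //.
  have ug := grpU gG hg; have ut' := grpU gG (inG _ ht'); rewrite -(@mulgK' t g t') //.
  apply: (coset_H gG gH (hG _ ht) (hG _ ht') (rho_G r (hG _ ht))) => //.
    exact: rho_H r (hG _ ht).
  by rewrite e; apply: rho_H r (hG _ ht').
have sb : {subset [seq rho H ts (t * g) | t <- ts] <= ts}.
  by move=> u /mapP [t ht ->]; apply: rho_in r (hG _ ht).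
have [_ eq] := uniq_min_size um sb (eq_leq (esym (size_map _ _))).
exact: uniq_perm.
Qed.

Lemma rt_perm G H a b : grp G -> grp H -> rt G H a -> rt G H b ->
  perm_eq [seq rho H b t | t <- a] b.
Proof.
move=> gG gH ra rb.
have inj : forall c d, rt G H c -> rt G H d -> uniq [seq rho H d t | t <- c].
  move=> c d rc rd; case: (rc) => inG uq _ dis.
  rewrite map_inj_in_uniq // => t t' ht ht' e; apply: dis => //.
  apply: (coset_H gG gH (inG _ ht) (inG _ ht') (rho_G rd (inG _ ht))).
    exact: rho_H rd (inG _ ht).
  by rewrite e; apply: rho_H rd (inG _ ht').
have sb : forall c d, rt G H c -> rt G H d -> {subset [seq rho H d t | t <- c] <= d}.
  move=> c d rc rd u /mapP [t ht ->]; apply: rho_in rd _.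
  by case: rc => inG _ _ _; apply: inG.
have le : (size b <= size a)%N.
  by rewrite -(size_map (rho H a) b); apply: uniq_leq_size; [apply: inj|apply: sb].
have := uniq_min_size (inj _ _ ra rb) (sb _ _ ra rb); rewrite size_map => /(_ le) [_ eq].
by apply: uniq_perm => //; [apply: inj|case: rb].
Qed.


Lemma rt_G G H ts t : rt G H ts -> t \in ts -> G t.
Proof. by case=> inG _ _ _; apply: inG. Qed.

Lemma fac_H G H ts g t : grp G -> rt G H ts -> G g -> t \in ts ->
  H (t * g * (rho H ts (t * g))^-1).
Proof. by move=> gG r hg ht; apply: (rho_H r); apply: grpM => //; apply: (rt_G r ht). Qed.

Lemma trH G H ts g : grp G -> grp H -> rt G H ts -> G g -> H (transfer H ts g).
Proof. by move=> gG gH r hg; rewrite trE; apply: (prodH (I:=mat)) => // t ht; apply: (fac_H gG r hg ht). Qed.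

Lemma abeq_mulr H x x' y : grp H -> H x' -> H y -> abeq H x x' -> abeq H (x * y) (x' * y).
Proof. by move=> gH hx' hy e; apply: abeq_mul => //; apply: abeq_refl; apply: (grpU gH). Qed.

Lemma abeq_mull H x y y' : grp H -> H x -> H y' -> abeq H y y' -> abeq H (x * y) (x * y').
Proof. by move=> gH hx hy' e; apply: abeq_mul => //; apply: abeq_refl; apply: (grpU gH). Qed.

Lemma abeq_transH H x y z : grp H -> H y -> abeq H x y -> abeq H y z -> abeq H x z.
Proof. by move=> gH hy; apply: abeq_trans; apply: (grpU gH). Qed.

Lemma abeq_symH H x y : grp H -> H x -> H y -> abeq H x y -> abeq H y x.
Proof. by move=> gH hx hy; apply: abeq_sym; apply: (grpU gH). Qed.

Lemma tr1 G H ts : grp G -> grp H -> rt G H ts -> transfer H ts 1 = 1.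
Proof.
move=> gG gH r; rewrite trE big1_seq // => t /andP [_ ht].
have ut := grpU gG (rt_G r ht).
rewrite mulr1 (rho_eq gG gH r (rt_G r ht) ht) ?mulrV //; exact: grp1.

Qed.

Lemma trM G H ts x y : grp G -> grp H -> sub H G -> rt G H ts -> G x -> G y ->
  abeq H (transfer H ts (x * y)) (transfer H ts x * transfer H ts y).
Proof.
move=> gG gH sHG r hx hy.
set f := fun z u => u * z * (rho H ts (u * z))^-1.
have hf : forall z u, G z -> u \in ts -> H (f z u) by move=> z u hz hu; apply: (fac_H gG r hz hu).
have rin : forall t, t \in ts -> rho H ts (t * x) \in ts.
  by move=> t ht; apply: (rho_in r); apply: grpM => //; apply: (rt_G r ht).
rewrite !trE.
have E : {in ts, (fun t => t * (x * y) * (rho H ts (t * (x * y)))^-1) =1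
                 (fun t => f x t * f y (rho H ts (t * x)))}.
  move=> t ht /=; rewrite /f.
  have htx : G (t * x) by apply: grpM => //; apply: (rt_G r ht).
  have hrx : G (rho H ts (t * x)) by apply: rho_G r htx.
  have ur := grpU gG hrx.
  have -> : rho H ts (t * (x * y)) = rho H ts (rho H ts (t * x) * y).
    apply: (rho_coset gG gH r).
    - by rewrite mulrA; apply: grpM.
    - by apply: grpM.
    by rewrite mulrA mulgK' ?(grpU gG) //; apply: (rho_H r htx).
  by rewrite !mulrA divrK.
rewrite (eq_big_seq _ E).
apply: (@abeq_transH _ _ (\prod_(t <- ts) f x t * \prod_(t <- ts) f y (rho H ts (t * x)))) => //.
- by apply: grpM => //; apply: (prodH (I:=mat)) => // t ht; apply: hf => //; apply: rin.
- by apply: (abeq_prodM (I:=mat)) => // t ht; apply: hf => //; try apply: rin.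
apply: abeq_mull => //.
- by apply: (prodH (I:=mat)) => // t ht; apply: hf.
- by apply: (prodH (I:=mat)) => // t ht; apply: hf.
rewrite -(big_map (fun t => rho H ts (t * x)) xpredT (f y)).
apply: (abeq_perm (I:=mat)) => //; first exact: (rho_perm gG gH r hx).
by move=> u /mapP [t ht ->]; apply: hf => //; apply: rin.
Qed.

Lemma trP G H ts (I : eqType) (s : seq I) (F : I -> mat) :
  grp G -> grp H -> sub H G -> rt G H ts -> {in s, forall i, G (F i)} ->
  abeq H (transfer H ts (\prod_(i <- s) F i)) (\prod_(i <- s) transfer H ts (F i)).
Proof.
move=> gG gH sHG r; elim: s => [|x s IH] hs.
  by rewrite !big_nil (tr1 gG gH r); apply: abeq_refl; exact: unitr1.
have hs' : {in s, forall i, G (F i)} by move=> i hi; apply: hs; rewrite inE hi orbT.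
have hx : G (F x) by apply: hs; rewrite inE eqxx.
rewrite !big_cons.
have hP : G (\prod_(i <- s) F i) by apply: (prodH (I:=I)).
apply: (@abeq_transH _ _ (transfer H ts (F x) * transfer H ts (\prod_(i <- s) F i))) => //.
- by apply: grpM => //; apply: (trH gG gH r).
- exact: (trM gG gH sHG r hx hP).
apply: abeq_mull => //; first exact: (trH gG gH r).
- by apply: (prodH (I:=I)) => // i hi; apply: (trH gG gH r); apply: hs'.
exact: IH.
Qed.


Lemma invD (x y : mat) : x \is a GRing.unit -> y \is a GRing.unit -> (x * y^-1)^-1 = y * x^-1.
Proof. by move=> ux uy; rewrite invrM ?unitrV // invrK. Qed.

Lemma tr_indep G H a b g : grp G -> grp H -> sub H G -> rt G H a -> rt G H b -> G g ->
  abeq H (transfer H b g) (transfer H a g).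
Proof.
move=> gG gH sHG ra rb hg.
set h := fun t => t * (rho H a t)^-1.
set fa := fun u => u * g * (rho H a (u * g))^-1.
have Gb : forall t, t \in b -> G t by move=> t; apply: rt_G rb.
have Ga : forall t, t \in a -> G t by move=> t; apply: rt_G ra.
have Hh : forall t, t \in b -> H (h t) by move=> t ht; apply: (rho_H ra); apply: Gb.
have HhV : forall t, t \in b -> H (h t)^-1 by move=> t ht; apply: grpV => //; apply: Hh.
have Hfa : forall u, u \in a -> H (fa u) by move=> u hu; apply: (fac_H gG ra hg hu).
have ra_in : forall t, t \in b -> rho H a t \in a by move=> t ht; apply: (rho_in ra); apply: Gb.
have rb_in : forall t, t \in b -> rho H b (t * g) \in b.
  by move=> t ht; apply: (rho_in rb); apply: grpM => //; apply: Gb.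
have E : {in b, (fun t => t * g * (rho H b (t * g))^-1) =1
            (fun t => h t * (fa (rho H a t) * (h (rho H b (t * g)))^-1))}.
  move=> t ht /=; rewrite /h /fa.
  have htg : G (t * g) by apply: grpM => //; apply: Gb.
  have hv := rb_in t ht; have Gv := Gb _ hv.
  have GA : G (rho H a t) by apply: Ga; apply: ra_in.
  have GB : G (rho H a (rho H b (t * g))) by apply: Ga; apply: ra_in.
  have -> : rho H a (rho H a t * g) = rho H a (rho H b (t * g)).
    apply: (rho_coset gG gH ra) => //; first by apply: grpM.
    have -> : rho H a t * g * (rho H b (t * g))^-1 =
       (t * (rho H a t)^-1)^-1 * (t * g * (rho H b (t * g))^-1).
      have ut : t \is a GRing.unit by apply: (grpU gG); apply: Gb.
      have uA := grpU gG GA.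
      by rewrite invD // !mulrA divrK.
    by apply: grpM => //; [apply: grpV => //; apply: Hh | apply: (rho_H rb htg)].
  by rewrite invD ?(grpU gG) // !mulrA !divrK ?(grpU gG).
rewrite !trE (eq_big_seq _ E).
have Ph : H (\prod_(t <- b) h t) by apply: (prodH (I:=mat)) => // t ht; auto.
have PhV : H (\prod_(t <- b) (h t)^-1) by apply: (prodH (I:=mat)) => // t ht; auto.
have Ta : H (\prod_(u <- a) fa u) by apply: (prodH (I:=mat)) => // t ht; auto.
have P1 : H (\prod_(t <- b) fa (rho H a t)) by apply: (prodH (I:=mat)) => // t ht; apply: Hfa; apply: ra_in.
have P2 : H (\prod_(t <- b) (h (rho H b (t * g)))^-1)
  by apply: (prodH (I:=mat)) => // t ht; apply: HhV; apply: rb_in.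
apply: (@abeq_transH _ _ (\prod_(t <- b) h t *
          \prod_(t <- b) (fa (rho H a t) * (h (rho H b (t * g)))^-1))) => //.
- by apply: grpM => //; apply: (prodH (I:=mat)) => // t ht; apply: grpM => //;
     [apply: Hfa; apply: ra_in | apply: HhV; apply: rb_in].
- apply: (abeq_prodM (I:=mat)) => // t ht.
  by apply: grpM => //; [apply: Hfa; apply: ra_in | apply: HhV; apply: rb_in].
apply: (@abeq_transH _ _ (\prod_(t <- b) h t * (\prod_(u <- a) fa u * \prod_(t <- b) (h t)^-1))) => //.
- by apply: grpM => //; apply: grpM.
- apply: abeq_mull => //; first by apply: grpM.
  apply: (@abeq_transH _ _ (\prod_(t <- b) fa (rho H a t) * \prod_(t <- b) (h (rho H b (t * g)))^-1)) => //.
  + by apply: grpM.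
  + apply: (abeq_prodM (I:=mat)) => // t ht; first by apply: Hfa; apply: ra_in.
    by apply: HhV; apply: rb_in.
  apply: abeq_mul => //.
  + rewrite -(big_map (rho H a) xpredT fa).
    apply: (abeq_perm (I:=mat)) => //; first exact: (rt_perm gG gH rb ra).
    by move=> u /mapP [t ht ->]; apply: Hfa; apply: ra_in.
  + rewrite -(big_map (fun t => rho H b (t * g)) xpredT (fun t => (h t)^-1)).
    apply: (abeq_perm (I:=mat)) => //; first exact: (rho_perm gG gH rb hg).
    by move=> u /mapP [t ht ->]; apply: HhV; apply: rb_in.
apply: (@abeq_transH _ _ (\prod_(u <- a) fa u * (\prod_(t <- b) h t * \prod_(t <- b) (h t)^-1))) => //.
- by apply: grpM => //; apply: grpM.
- rewrite !mulrA; apply: abeq_mulr => //; first by apply: grpM.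
  exact: abeq_comm.
rewrite -[X in abeq H _ X]mulr1; apply: abeq_mull => //; first exact: grp1.
have E1 : \prod_(t <- b) (h t * (h t)^-1) = 1.
  by rewrite big1_seq // => t /andP [_ ht]; rewrite mulrV // (grpU gH) // Hh.
have HP : H (\prod_(t <- b) (h t * (h t)^-1)) by rewrite E1; exact: grp1.
apply: (@abeq_transH _ _ (\prod_(t <- b) (h t * (h t)^-1))) => //.
- apply: abeq_symH => //; first by apply: grpM.
  apply: (abeq_prodM (I:=mat)) => // t ht; by [apply: Hh | apply: HhV].
by rewrite E1; apply: abeq_refl; exact: unitr1.
Qed.


Definition pairs (ts us : seq mat) := [seq u * t | t <- ts, u <- us].

Lemma rt_pairs G H K ts us : grp G -> grp H -> grp K -> sub H G -> sub K H ->
  rt G H ts -> rt H K us -> rt G K (pairs ts us).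
Proof.
move=> gG gH gK sHG sKH rts rus.
case: (rts) => inG uts covts dists; case: (rus) => inH uus covus distus.
have uG : forall x, G x -> x \is a GRing.unit by move=> x; apply: grpU.
split.
- move=> v /allpairsP [[t u] /= [ht hu ->]].
  by apply: grpM => //; [apply: sHG; apply: inH | apply: inG].
- rewrite /pairs; apply: allpairs_uniq => // [[t u] [t' u']] /allpairsP [[t1 u1] /= [h1 h2 [-> ->]]].
  move=> /allpairsP [[t2 u2] /= [h3 h4 [-> ->]]] /= e.
  have ut2 := uG _ (inG _ h3).
  have et : t1 = t2.
    apply: dists => //.
    have -> : t1 * t2^-1 = u1^-1 * u2.
      have uu1 : u1 \is a GRing.unit by apply: uG; apply: sHG; apply: inH.
      by rewrite -{1}[t1](mulKr uu1) e !mulrA mulrK.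
    by apply: grpM => //; [apply: grpV => //|]; apply: inH.
  by subst; congr (_, _); apply: (mulIr ut2).
- move=> g hg; have [t ht hgt] := covts g hg.
  have [u hu hhu] := covus _ hgt.
  exists (u * t); first by apply: allpairs_f.
  have ut := uG _ (inG _ ht); have uu := uG _ (sHG _ (inH _ hu)).
  by rewrite invrM // mulrA.
- move=> v v' /allpairsP [[t u] /= [ht hu ->]] /allpairsP [[t' u'] /= [ht' hu' ->]] hk.
  have ut := uG _ (inG _ ht); have uu := uG _ (sHG _ (inH _ hu)).
  have ut' := uG _ (inG _ ht'); have uu' := uG _ (sHG _ (inH _ hu')).
  have et : t = t'.
    apply: dists => //.
    have -> : t * t'^-1 = u^-1 * (u * t * (u' * t')^-1) * u'.
      by rewrite invrM // !mulrA mulVr // mul1r divrK.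
    apply: grpM => //; last by apply: inH.
    by apply: grpM => //; [apply: grpV => //; apply: inH | apply: sKH].
  subst t'; congr (_ * _); apply: distus => //.
  by move: hk; rewrite mulgK'.
Qed.

Lemma tr_trans G H K ts us g : grp G -> grp H -> grp K -> sub H G -> sub K H ->
  rt G H ts -> rt H K us -> G g ->
  abeq K (transfer K us (transfer H ts g)) (transfer K (pairs ts us) g).
Proof.
move=> gG gH gK sHG sKH rts rus hg.
have rvs := rt_pairs gG gH gK sHG sKH rts rus.
have uG : forall x, G x -> x \is a GRing.unit by move=> x; apply: grpU.
set ht := fun t => t * g * (rho H ts (t * g))^-1.
have Gt : forall t, t \in ts -> G t by move=> t; apply: rt_G rts.
have Hht : forall t, t \in ts -> H (ht t) by move=> t h; apply: (fac_H gG rts hg h).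
have E : transfer K (pairs ts us) g = \prod_(t <- ts) transfer K us (ht t).
  rewrite trE /pairs big_allpairs_dep /=.
  apply: eq_big_seq => t ht0; rewrite trE; apply: eq_big_seq => u hu /=.
  have Hu : H u by apply: (rt_G rus hu).
  have Htg : G (t * g) by apply: grpM => //; apply: Gt.
  have Huh : H (u * ht t) by apply: grpM => //; apply: Hht.
  have GB : G (rho H ts (t * g)) by apply: (rho_G rts Htg).
  have HA : H (rho K us (u * ht t)) by apply: (rho_G rus Huh).
  have uB := uG _ GB; have uA := uG _ (sHG _ HA).
  have -> : rho K (pairs ts us) (u * t * g) = rho K us (u * ht t) * rho H ts (t * g).
    apply: (rho_eq gG gK rvs).
    - by apply: grpM => //; apply: grpM => //; [apply: sHG | apply: Gt].
    - by apply: allpairs_f => //; [apply: (rho_in rts Htg) | apply: (rho_in rus Huh)].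
    by have := rho_H rus Huh; rewrite invrM // /ht !mulrA.
  by rewrite invrM // /ht !mulrA.
rewrite E trE.
exact: (trP (I:=mat) gH gK sKH rus Hht).
Qed.


Lemma ord2 (i : 'I_2) : i = 0 \/ i = 1.
Proof. case: i => [[|[|k]] Hk]; [left|right|] => //; by apply: val_inj. Qed.

Lemma L01 : lift ord0 ord0 = 1 :> 'I_2. Proof. by apply: val_inj. Qed.
Lemma L10 : lift 1 0 = 0 :> 'I_2. Proof. by apply: val_inj. Qed.

Lemma mat_eq (A B : mat) : ea A = ea B -> eb A = eb B -> ec A = ec B -> ed A = ed B -> A = B.
Proof.
move=> h1 h2 h3 h4; apply/matrixP => i j.
by case: (ord2 i) => ->; case: (ord2 j) => ->.
Qed.

Lemma sum2 (F : 'I_2 -> int) : \sum_(k < 2) F k = F 0 + F 1.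
Proof. by rewrite !big_ord_recl big_ord0 addr0 L01. Qed.

Lemma eaM (A B : mat) : ea (A * B) = ea A * ea B + eb A * ec B.
Proof. by rewrite /ea !mxE sum2. Qed.
Lemma ebM (A B : mat) : eb (A * B) = ea A * eb B + eb A * ed B.
Proof. by rewrite /eb !mxE sum2. Qed.
Lemma ecM (A B : mat) : ec (A * B) = ec A * ea B + ed A * ec B.
Proof. by rewrite /ec !mxE sum2. Qed.
Lemma edM (A B : mat) : ed (A * B) = ec A * eb B + ed A * ed B.
Proof. by rewrite /ed !mxE sum2. Qed.

Lemma ea1 : ea 1 = 1. Proof. by rewrite /ea mxE. Qed.
Lemma eb1 : eb 1 = 0. Proof. by rewrite /eb mxE. Qed.
Lemma ec1 : ec 1 = 0. Proof. by rewrite /ec mxE. Qed.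
Lemma ed1 : ed 1 = 1. Proof. by rewrite /ed mxE. Qed.

Lemma det2 (A : mat) : \det A = ea A * ed A - eb A * ec A.
Proof.
rewrite (expand_det_row A 0) !big_ord_recl big_ord0 /cofactor !det_mx11 !mxE /=.
by rewrite L01 /= L10 expr0 expr1 mul1r addr0 mulN1r mulrN.
Qed.

Definition mk (a b c d : int) : mat :=
  \matrix_(i, j) (if i == 0 then (if j == 0 then a else b) else (if j == 0 then c else d)).

Lemma ea_mk a b c d : ea (mk a b c d) = a. Proof. by rewrite /ea mxE. Qed.
Lemma eb_mk a b c d : eb (mk a b c d) = b. Proof. by rewrite /eb mxE. Qed.
Lemma ec_mk a b c d : ec (mk a b c d) = c. Proof. by rewrite /ec mxE. Qed.
Lemma ed_mk a b c d : ed (mk a b c d) = d. Proof. by rewrite /ed mxE. Qed.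

Lemma SL2_unit A : SL2 A -> A \is a GRing.unit.
Proof. by move=> /eqP h; change (A \in unitmx); rewrite unitmxE h unitr1. Qed.

Lemma SL2E A : SL2 A = (ea A * ed A - eb A * ec A == 1).
Proof. by rewrite /SL2 det2. Qed.

Lemma invSL2 A : SL2 A -> A^-1 = mk (ed A) (- eb A) (- ec A) (ea A).
Proof.
move=> hA; have uA := SL2_unit hA; move: hA; rewrite SL2E => /eqP hA.
have e : mk (ed A) (- eb A) (- ec A) (ea A) * A = 1.
  apply: mat_eq; rewrite ?eaM ?ebM ?ecM ?edM ?ea_mk ?eb_mk ?ec_mk ?ed_mk ?ea1 ?eb1 ?ec1 ?ed1.
  - by rewrite -hA; ring.
  - by ring.
  - by ring.
  - by rewrite -hA; ring.
by rewrite -[LHS]mul1r -e mulrK.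
Qed.

Lemma eaV A : SL2 A -> ea A^-1 = ed A. Proof. by move=> h; rewrite invSL2 // ea_mk. Qed.
Lemma ebV A : SL2 A -> eb A^-1 = - eb A. Proof. by move=> h; rewrite invSL2 // eb_mk. Qed.
Lemma ecV A : SL2 A -> ec A^-1 = - ec A. Proof. by move=> h; rewrite invSL2 // ec_mk. Qed.
Lemma edV A : SL2 A -> ed A^-1 = ea A. Proof. by move=> h; rewrite invSL2 // ed_mk. Qed.

Lemma SL2M A B : SL2 A -> SL2 B -> SL2 (A * B).
Proof. by rewrite /SL2 => /eqP h1 /eqP h2; change (\det (A *m B) == 1); rewrite det_mulmx h1 h2 mulr1. Qed.

Lemma SL2V A : SL2 A -> SL2 A^-1.
Proof. by move=> h; rewrite SL2E eaV ?ebV ?ecV ?edV //; move: h; rewrite SL2E => /eqP <-; apply/eqP; ring. Qed.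

Lemma SL21 : SL2 1. Proof. by rewrite SL2E ea1 eb1 ec1 ed1; apply/eqP; ring. Qed.


Lemma dvdzN' (d m : int) : (d %| m)%Z -> (d %| - m)%Z.
Proof. by move=> h; rewrite -sub0r; apply: rpredB => //; exact: dvdz0. Qed.

Lemma Gamma1E M A : Gamma1 M A =
  [&& SL2 A, (M%:Z %| ec A)%Z, (M%:Z %| ea A - 1)%Z & (M%:Z %| ed A - 1)%Z].
Proof. by rewrite /Gamma1 !eqz_mod_dvd. Qed.

Lemma grp_Gamma1 M : grp (Gamma1 M).
Proof.
split.
- by rewrite Gamma1E SL21 ea1 ed1 ec1 subrr dvdz0.
- move=> x y; rewrite !Gamma1E => /and4P [s1 c1 a1 d1] /and4P [s2 c2 a2 d2].
  apply/and4P; split; first exact: SL2M.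
  + by rewrite ecM; apply: rpredD; [apply: dvdz_mulr|apply: dvdz_mull].
  + have -> : ea (x * y) - 1 = (ea x - 1) * ea y + (ea y - 1) + eb x * ec y by rewrite eaM; ring.
    by apply: rpredD; [apply: rpredD => //; apply: dvdz_mulr|apply: dvdz_mull].
  + have -> : ed (x * y) - 1 = ec x * eb y + (ed x - 1) * ed y + (ed y - 1) by rewrite edM; ring.
    by apply: rpredD => //; apply: rpredD; [apply: dvdz_mulr|apply: dvdz_mulr].
- move=> x; rewrite !Gamma1E => /and4P [s1 c1 a1 d1].
  by rewrite SL2V // eaV // ecV // edV // dvdzN' //= a1 d1.
- by move=> x; rewrite Gamma1E => /and4P [s _ _ _]; apply: SL2_unit.
Qed.

Lemma grp_Gamma0 M : grp (Gamma0 M).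
Proof.
split.
- by rewrite /Gamma0 SL21 ec1 dvdz0.
- move=> x y; rewrite /Gamma0 => /andP [s1 c1] /andP [s2 c2].
  rewrite SL2M // ecM; apply: rpredD; [exact: dvdz_mulr|exact: dvdz_mull].
- by move=> x; rewrite /Gamma0 => /andP [s1 c1]; rewrite SL2V // ecV // dvdzN'.
- by move=> x /andP [s _]; apply: SL2_unit.
Qed.

Lemma grp_Gamma0up2 : grp Gamma0up2.
Proof.
split.
- by rewrite /Gamma0up2 SL21 eb1 dvdz0.
- move=> x y; rewrite /Gamma0up2 => /andP [s1 c1] /andP [s2 c2].
  rewrite SL2M // ebM; apply: rpredD; [exact: dvdz_mull|exact: dvdz_mulr].
- by move=> x; rewrite /Gamma0up2 => /andP [s1 c1]; rewrite SL2V // ebV // dvdzN'.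
- by move=> x /andP [s _]; apply: SL2_unit.
Qed.

Lemma grpI (G H : pred mat) : grp G -> grp H -> grp (fun A => G A && H A).
Proof.
move=> gG gH; split.
- by rewrite !grp1.
- by move=> x y /andP [a b] /andP [c d]; rewrite !grpM.
- by move=> x /andP [a b]; rewrite !grpV.
- by move=> x /andP [a _]; apply: (grpU gG).
Qed.

Lemma grp_Phi N r s : grp (Phi N r s).
Proof. exact: (grpI (grp_Gamma1 _) (grp_Gamma0 _)). Qed.

Lemma grp_cap G : grp G -> grp (capG02 G).
Proof. move=> gG; exact: (grpI gG grp_Gamma0up2). Qed.


Lemma par (b : int) : (2 %| b)%Z || (2 %| b - 1)%Z.
Proof.
have e := divz_eq b 2.
have h0 : 0 <= (b %% 2)%Z by apply: modz_ge0.
have h1 : (b %% 2 < 2)%Z by apply: ltz_pmod.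
have : (b %% 2)%Z = 0 \/ (b %% 2)%Z = 1 by lia.
case=> m.
- by apply/orP; left; apply/dvdzP; exists (b %/ 2)%Z; rewrite {1}e m addr0.
- by apply/orP; right; apply/dvdzP; exists (b %/ 2)%Z; rewrite {1}e m addrK.
Qed.

Lemma eac A : ea (conjt A) = ea A.
Proof. by rewrite /ea /conjt mxE /tdiag /= mul1r divz1. Qed.
Lemma ecc A : ec (conjt A) = 2 * ec A.
Proof. by rewrite /ec /conjt mxE /tdiag /= divz1. Qed.
Lemma edc A : ed (conjt A) = ed A.
Proof. by rewrite /ed /conjt mxE /tdiag /= mulKz. Qed.
Lemma ebc A : (2 %| eb A)%Z -> eb (conjt A) * 2 = eb A.
Proof. by move=> h; rewrite /eb /conjt mxE /tdiag /= mul1r divzK. Qed.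

Lemma G02E A : Gamma0up2 A = SL2 A && (2 %| eb A)%Z. Proof. by []. Qed.

Lemma two_neq0 : (2 : int) != 0. Proof. by []. Qed.

Lemma conjtM A B : Gamma0up2 A -> Gamma0up2 B -> conjt (A * B) = conjt A * conjt B.
Proof.
move=> /andP [sA bA] /andP [sB bB].
have bAB : (2 %| eb (A * B))%Z by rewrite ebM; apply: rpredD; [apply: dvdz_mull|apply: dvdz_mulr].
have eA := ebc bA; have eB := ebc bB; have eAB := ebc bAB.
apply: mat_eq; rewrite ?eaM ?ebM ?ecM ?edM ?eac ?ecc ?edc ?eaM ?ecM ?edM.
- by rewrite -eA; ring.
- apply: (mulIf two_neq0); rewrite eAB ebM -eA -eB; ring.
- by ring.
- by rewrite -eB; ring.
Qed.

Lemma conjt1 : conjt 1 = 1.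
Proof.
have b1 : (2 %| eb 1)%Z by rewrite eb1 dvdz0.
apply: mat_eq; rewrite ?eac ?ecc ?edc ?ea1 ?ec1 ?ed1 ?eb1 //.
by apply: (mulIf two_neq0); rewrite ebc // eb1 mul0r.
Qed.

Lemma SL2c A : Gamma0up2 A -> SL2 (conjt A).
Proof.
move=> /andP [sA bA]; rewrite SL2E eac edc ecc; move: sA; rewrite SL2E.
have -> : ea A * ed A - eb (conjt A) * (2 * ec A) = ea A * ed A - eb A * ec A.
  by rewrite -(ebc bA); ring.
done.
Qed.

Lemma G02_conjt_unit A : Gamma0up2 A -> conjt A \is a GRing.unit.
Proof. by move=> h; apply: SL2_unit; apply: SL2c. Qed.

Lemma conjtV A : Gamma0up2 A -> conjt A^-1 = (conjt A)^-1.
Proof.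
move=> h; have hV := grpV grp_Gamma0up2 h.
have e : conjt A * conjt A^-1 = 1.
  rewrite -conjtM // mulrV ?conjt1 //; exact: (grpU grp_Gamma0up2).
by rewrite -[LHS]mul1r -(mulVr (G02_conjt_unit h)) -mulrA e mulr1.
Qed.


Lemma dvdz_natE (m n : nat) : ((m%:Z) %| (n%:Z))%Z = (m %| n)%N.
Proof. by rewrite dvdzE. Qed.

Lemma subGP N r s : (s <= r)%N -> sub (Gamma1 (N * 2 ^ r)) (Phi N r s).
Proof.
move=> sr A; rewrite /Phi !Gamma1E /Gamma0 => /and4P [sA cA aA dA].
have d1 : ((N * 2 ^ s)%N%:Z %| (N * 2 ^ r)%N%:Z)%Z.
  by rewrite dvdz_natE dvdn_mul // dvdn_exp2l.
have d2 : ((2 ^ r)%N%:Z %| (N * 2 ^ r)%N%:Z)%Z by rewrite dvdz_natE dvdn_mull.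
rewrite sA (dvdz_trans d2 cA) (dvdz_trans d1 cA) (dvdz_trans d1 aA) (dvdz_trans d1 dA).
done.
Qed.

Lemma Phi_c N r s A : odd N -> (s <= r)%N -> Phi N r s A -> ((N * 2 ^ r)%N%:Z %| ec A)%Z.
Proof.
move=> oN sr; rewrite /Phi Gamma1E /Gamma0 => /andP [/and4P [_ cA _ _] /andP [_ c2]].
rewrite PoszM Gauss_dvdz; last by rewrite coprimezE /= coprimeXr // coprimen2.
rewrite c2 andbT; apply: dvdz_trans cA; rewrite dvdz_natE; exact: dvdn_mulr.
Qed.

Lemma dcrit N r s x y : odd N -> (s <= r)%N -> Phi N r s x -> Phi N r s y ->
  ed x = ed y -> Gamma1 (N * 2 ^ r) (x * y^-1).
Proof.
move=> oN sr px py e.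
have cx := Phi_c oN sr px; have cy := Phi_c oN sr py.
have sx : SL2 x by case/andP: px => /andP [].
have sy : SL2 y by case/andP: py => /andP [].
move: (sx) (sy); rewrite !SL2E => /eqP dx /eqP dy.
rewrite Gamma1E SL2M ?SL2V //=.
rewrite eaM ecM edM eaV // ebV // ecV // edV //.
apply/and3P; split.
- by apply: rpredD; [apply: dvdz_mulr | apply: dvdz_mull; apply: dvdzN'].
- have -> : ea x * ed y + eb x * - ec y - 1 = eb x * ec x - eb x * ec y.
    by rewrite -e -dx; ring.
  by apply: rpredB; apply: dvdz_mull.
- have -> : ec x * - eb y + ed x * ea y - 1 = - (ec x * eb y) + eb y * ec y.
    by rewrite e -dy; ring.
  by apply: rpredD; [apply: dvdzN'; apply: dvdz_mulr | apply: dvdz_mull].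
Qed.

Lemma Gamma1_conjt K A : Gamma1 K A -> Gamma0up2 A -> Gamma1 K (conjt A).
Proof.
move=> hA h2; move: hA; rewrite !Gamma1E SL2c // eac edc ecc => /and4P [_ c a d].
by rewrite a d dvdz_mull.
Qed.

Lemma Gamma0_conjt K A : Gamma0 K A -> Gamma0up2 A -> Gamma0 K (conjt A).
Proof.
by move=> /andP [_ c] h2; rewrite /Gamma0 SL2c // ecc dvdz_mull.
Qed.

Lemma Phi_conjt N r s A : capG02 (Phi N r s) A -> Phi N r s (conjt A).
Proof.
move=> /andP [/andP [h1 h0] h2].
by rewrite /Phi Gamma1_conjt // Gamma0_conjt.
Qed.

Lemma G1_conjt M A : capG02 (Gamma1 M) A -> Gamma1 M (conjt A).
Proof. by move=> /andP [h1 h2]; apply: Gamma1_conjt. Qed.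

Definition Tm : mat := mk 1 1 0 1.

Lemma Tm_G1 K : Gamma1 K Tm.
Proof.
rewrite Gamma1E SL2E /Tm ea_mk eb_mk ec_mk ed_mk subrr dvdz0.
by rewrite mul1r mulr0 subr0 eqxx.
Qed.

Definition wt (t : mat) := if (2 %| eb t)%Z then t else Tm * t.

Lemma wt_spec N r s t : (1 <= s)%N -> (s <= r)%N -> Phi N r s t ->
  capG02 (Phi N r s) (wt t) /\ Gamma1 (N * 2 ^ r) (t * (wt t)^-1).
Proof.
move=> s1 sr pt.
have gG := grp_Gamma1 (N * 2 ^ r).
have sP := subGP (N:=N) sr.
have ut : t \is a GRing.unit by apply: (grpU (grp_Phi N r s)).
rewrite /wt; case: ifP => hb.
- split; first by rewrite /capG02 pt /Gamma0up2 hb andbT; case/andP: pt => /andP [].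
  by rewrite mulrV //; apply: grp1.
split.
- apply/andP; split; first by apply: (grpM (grp_Phi N r s)) => //; apply: sP; apply: Tm_G1.
  apply/andP; split; first by apply: SL2M; [case/andP: (Tm_G1 1) | case/andP: pt => /andP []].
  rewrite ebM /Tm ea_mk eb_mk !mul1r.
  have := par (eb t); rewrite hb /= => hb1.
  have hd : (2 %| ed t - 1)%Z.
    case/andP: pt => /and4P [_ _ _ d] _; move: d; rewrite eqz_mod_dvd; apply: dvdz_trans.
    by rewrite dvdz_natE dvdn_mull // dvdn_exp.
  have -> : eb t + ed t = (eb t - 1) + (ed t - 1) + 2 by ring.
  by apply: rpredD; [apply: rpredD|apply: dvdzz].
- have uT : Tm \is a GRing.unit by apply: (grpU gG); apply: Tm_G1.
  rewrite invrM // mulrA mulrV // mul1r.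
  by apply: (grpV gG); apply: Tm_G1.
Qed.


Lemma rt_map G H ts (f : mat -> mat) : grp G -> grp H -> sub H G -> rt G H ts ->
  (forall t, t \in ts -> G (f t)) -> (forall t, t \in ts -> H (t * (f t)^-1)) ->
  rt G H (map f ts).
Proof.
move=> gG gH sHG r hf hH; case: (r) => inG uq cov dis.
have key : forall t t', t \in ts -> t' \in ts -> H (f t * (f t')^-1) -> t = t'.
  move=> t t' ht ht' h; apply: dis => //.
  have -> : t * t'^-1 = (t * (f t)^-1) * (f t * (f t')^-1) * (t' * (f t')^-1)^-1.
    have u1 := grpU gG (hf _ ht); have u2 := grpU gG (hf _ ht'); have u3 := grpU gG (inG _ ht').
    by rewrite invD // !mulrA !divrK.
  apply: grpM => //; first by apply: grpM => //; apply: hH.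
  by apply: grpV => //; apply: hH.
split.
- by move=> u /mapP [t ht ->]; apply: hf.
- rewrite map_inj_in_uniq // => t t' ht ht' e; apply: key => //.
  by rewrite e mulrV ?(grpU gG) ?hf //; apply: grp1.
- move=> g hg; have [t ht hgt] := cov g hg; exists (f t); first exact: map_f.
  have -> : g * (f t)^-1 = (g * t^-1) * (t * (f t)^-1).
    by rewrite mulrA divrK // (grpU gG) // inG.
  by apply: grpM => //; apply: hH.
- move=> u u' /mapP [t ht ->] /mapP [t' ht' ->] h.
  by rewrite (key t t').
Qed.

Lemma rt_restr G H K H' ts : grp G -> grp H -> grp K -> sub K G -> rt G H ts ->
  (forall t, t \in ts -> K t) -> (forall x, K x -> H' x = H x) -> rt K H' ts.
Proof.
move=> gG gH gK sKG r hK eH; case: r => inG uq cov dis; split => //.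
- move=> g hg; have [t ht h] := cov g (sKG _ hg); exists t => //.
  by rewrite eH //; apply: grpM => //; apply: grpV => //; apply: hK.
- move=> t t' ht ht' h; apply: dis => //; rewrite -eH //.
  by apply: grpM => //; [apply: hK | apply: grpV => //; apply: hK].
Qed.

Lemma commsub_conjt M z : commsub (capG02 (Gamma1 M)) z -> commsub (Gamma1 M) (conjt z).
Proof.
have gK := grp_cap (grp_Gamma1 M).
have h02 : forall x, capG02 (Gamma1 M) x -> Gamma0up2 x by move=> x /andP [].
have g02 := grp_Gamma0up2.
elim=> {z}.
- move=> x y hx hy; change (commsub (Gamma1 M) (conjt (x * y * x^-1 * y^-1))).
  have ax := h02 _ hx; have ay := h02 _ hy.
  rewrite !conjtM ?conjtV //; try by do ?apply: grpM => //; do ?apply: grpV.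
  by apply: cs_comm'; apply: G1_conjt.
- rewrite conjt1; exact: cs_one'.
- move=> x y cx hx cy hy; change (commsub (Gamma1 M) (conjt (x * y))).
  have ax := h02 _ (commsub_in gK cx); have ay := h02 _ (commsub_in gK cy).
  by rewrite conjtM //; apply: cs_mul'.
- move=> x cx hx; change (commsub (Gamma1 M) (conjt x^-1)).
  have ax := h02 _ (commsub_in gK cx).
  by rewrite conjtV //; apply: cs_inv'.
Qed.

Lemma conjt_prod (s : seq mat) (F : mat -> mat) : {in s, forall i, Gamma0up2 (F i)} ->
  conjt (\prod_(i <- s) F i) = \prod_(i <- s) conjt (F i).
Proof.
elim: s => [|x s IH] h; first by rewrite !big_nil conjt1.
have h' : {in s, forall i, Gamma0up2 (F i)} by move=> i hi; apply: h; rewrite inE hi orbT.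
rewrite !big_cons conjtM ?IH //; first by apply: h; rewrite inE eqxx.
exact: (prodH (I:=mat)) grp_Gamma0up2 h'.
Qed.


Lemma conj_tr N r s ws y : odd N -> (s <= r)%N ->
  rt (capG02 (Phi N r s)) (capG02 (Gamma1 (N * 2 ^ r))) ws ->
  rt (Phi N r s) (Gamma1 (N * 2 ^ r)) (map conjt ws) ->
  capG02 (Phi N r s) y ->
  conjt (transfer (capG02 (Gamma1 (N * 2 ^ r))) ws y) =
  transfer (Gamma1 (N * 2 ^ r)) (map conjt ws) (conjt y).
Proof.
move=> oN sr rP rF Py.
have gP := grp_cap (grp_Phi N r s).
have gK := grp_cap (grp_Gamma1 (N * 2 ^ r)).
have sKP : sub (capG02 (Gamma1 (N * 2 ^ r))) (capG02 (Phi N r s)).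
  by move=> x /andP [h1 h2]; rewrite /capG02 h2 andbT; apply: (subGP (N:=N) sr).
have P02 : forall x, capG02 (Phi N r s) x -> Gamma0up2 x by move=> x /andP [].
rewrite !trE big_map conjt_prod; last first.
  move=> t ht; apply: P02; apply: grpM => //; first by apply: grpM => //; apply: (rt_G rP ht).
  by apply: grpV => //; apply: (rho_G rP); apply: grpM => //; apply: (rt_G rP ht).
apply: eq_big_seq => t ht.
have Pt := rt_G rP ht.
have Pty : capG02 (Phi N r s) (t * y) by apply: grpM.
have Pr := rho_G rP Pty.
have Hr := rho_H rP Pty.
have e1 : conjt (t * y * (rho (capG02 (Gamma1 (N * 2 ^ r))) ws (t * y))^-1) =
   conjt t * conjt y * (conjt (rho (capG02 (Gamma1 (N * 2 ^ r))) ws (t * y)))^-1.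
  have Vr : capG02 (Phi N r s) (rho (capG02 (Gamma1 (N * 2 ^ r))) ws (t * y))^-1 by apply: grpV.
  by rewrite conjtM ?P02 // conjtM ?P02 // conjtV ?P02.
rewrite e1; congr (_ * _ * (_)^-1); symmetry.
apply: (rho_eq (grp_Phi N r s) (grp_Gamma1 _) rF).
- by rewrite -conjtM ?P02 //; apply: Phi_conjt.
- by apply: map_f; apply: (rho_in rP Pty).
rewrite -conjtM ?P02 // -conjtV ?P02 // -conjtM ?P02 //; last by apply: grpV.
  by apply: G1_conjt.
Qed.

Unset Implicit Arguments.

Theorem lemma3p6 (N r s : nat) (ts1 ts2 ts3 : seq 'M[int]_2) :
  odd N -> (0 < N)%N -> (2 <= s)%N -> (s <= r)%N ->
  is_rtransversal (Phi N r s) (Gamma1 (N * 2 ^ r)) ts1 ->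
  is_rtransversal (Phi N r s) (capG02 (Phi N r s)) ts2 ->
  is_rtransversal (Gamma1 (N * 2 ^ r)) (capG02 (Gamma1 (N * 2 ^ r))) ts3 ->
  forall g : 'M[int]_2, Phi N r s g ->
    abeq (Gamma1 (N * 2 ^ r))
      (transfer (Gamma1 (N * 2 ^ r)) ts1 (atkin (Phi N r s) ts2 g))
      (atkin (Gamma1 (N * 2 ^ r)) ts3 (transfer (Gamma1 (N * 2 ^ r)) ts1 g)).
Proof.
move=> oN N0 s2 sr h1 h2 h3 g pg.
have s1 : (1 <= s)%N by apply: leq_trans s2.
have gF := grp_Phi N r s.
have gG := grp_Gamma1 (N * 2 ^ r).
have gP := grp_cap gF.
have gK := grp_cap gG.
have sGF : sub (Gamma1 (N * 2 ^ r)) (Phi N r s) := subGP (N:=N) sr.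
have sPF : sub (capG02 (Phi N r s)) (Phi N r s) by move=> x /andP [].
have sKG : sub (capG02 (Gamma1 (N * 2 ^ r))) (Gamma1 (N * 2 ^ r)) by move=> x /andP [].
have sKP : sub (capG02 (Gamma1 (N * 2 ^ r))) (capG02 (Phi N r s)).
  by move=> x /andP [h h']; rewrite /capG02 h' andbT; apply: sGF.
have sKF : sub (capG02 (Gamma1 (N * 2 ^ r))) (Phi N r s) by move=> x /sKP /sPF.
have r1 := rt_of gF gG sGF h1.
have r2 := rt_of gF gP sPF h2.
have r3 := rt_of gG gK sKG h3.
pose ws := map wt ts1.
have rw1 : rt (Phi N r s) (Gamma1 (N * 2 ^ r)) ws.
  apply: (rt_map gF gG sGF r1) => t ht.
  - by apply: sPF; case: (wt_spec s1 sr (rt_G r1 ht)).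
  - by case: (wt_spec s1 sr (rt_G r1 ht)).
have rw : rt (capG02 (Phi N r s)) (capG02 (Gamma1 (N * 2 ^ r))) ws.
  apply: (rt_restr gF gG gP sPF rw1).
  - by move=> u /mapP [t ht ->]; case: (wt_spec s1 sr (rt_G r1 ht)).
  - by move=> x /andP [_ h]; rewrite /capG02 h andbT.
have rw' : rt (Phi N r s) (Gamma1 (N * 2 ^ r)) (map conjt ws).
  apply: (rt_map gF gG sGF rw1) => t ht.
  - by apply: Phi_conjt; apply: (rt_G rw ht).
  - apply: (dcrit oN sr (rt_G rw1 ht)); last by rewrite edc.
    by apply: Phi_conjt; apply: (rt_G rw ht).
set y := transfer (capG02 (Phi N r s)) ts2 g.
have Py : capG02 (Phi N r s) y by apply: (trH gF gP r2 pg).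
set X := transfer (capG02 (Gamma1 (N * 2 ^ r))) ts3 (transfer (Gamma1 (N * 2 ^ r)) ts1 g).
set Z := transfer (capG02 (Gamma1 (N * 2 ^ r))) ws y.
have KX : capG02 (Gamma1 (N * 2 ^ r)) X by apply: (trH gG gK r3); apply: (trH gF gG r1 pg).
have KZ : capG02 (Gamma1 (N * 2 ^ r)) Z by apply: (trH gP gK rw Py).
have rp1 := rt_pairs gF gG gK sGF sKG r1 r3.
have rp2 := rt_pairs gF gP gK sPF sKP r2 rw.
have A1 := tr_trans gF gG gK sGF sKG r1 r3 pg.
have A2 := tr_indep gF gK sKF rp2 rp1 pg.
have A3 := tr_trans gF gP gK sPF sKP r2 rw pg.
have Kp1 := trH gF gK rp1 pg.
have Kp2 := trH gF gK rp2 pg.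
have AXZ : abeq (capG02 (Gamma1 (N * 2 ^ r))) X Z.
  apply: (abeq_transH gK Kp1 A1).
  apply: (abeq_transH gK Kp2 A2).
  exact: (abeq_symH gK KZ Kp2 A3).
have B : abeq (Gamma1 (N * 2 ^ r)) (conjt X) (conjt Z).
  have := commsub_conjt AXZ.
  have X02 : Gamma0up2 X by case/andP: KX.
  have Z02 : Gamma0up2 Z by case/andP: KZ.
  have ZV : Gamma0up2 Z^-1 by apply: (grpV grp_Gamma0up2).
  by rewrite /abeq; change (commsub (Gamma1 (N * 2 ^ r)) (conjt (X * Z^-1)) ->
      commsub (Gamma1 (N * 2 ^ r)) (conjt X * (conjt Z)^-1)); rewrite conjtM // conjtV.
have C := conj_tr oN sr rw rw' Py.
have D := tr_indep gF gG sGF r1 rw' (Phi_conjt Py).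
change (abeq (Gamma1 (N * 2 ^ r)) (transfer (Gamma1 (N * 2 ^ r)) ts1 (conjt y)) (conjt X)).
have GX : Gamma1 (N * 2 ^ r) (conjt X) by apply: G1_conjt.
have GZ : Gamma1 (N * 2 ^ r) (conjt Z) by apply: G1_conjt.
have GT1 : Gamma1 (N * 2 ^ r) (transfer (Gamma1 (N * 2 ^ r)) ts1 (conjt y)).
  by apply: (trH gF gG r1); apply: Phi_conjt.
apply: (abeq_transH gG GZ).
  rewrite C; apply: (abeq_symH gG _ GT1 D).
  by rewrite -C.
exact: (abeq_symH gG GX GZ B).
Qed.
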